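(* Let $m\ge 2$, let $C=uRM(m)$ (defined in the context) with base qubits $b_0,\dots,b_m$ and parity labels $L(q)$. Then $C$ is an $(m-1)$-parity code: for every subset $K\subseteq\{0,\dots,m\}$ with $|K|=m-1$, the number of qubits $q$ with $K\subseteq L(q)$ is even.
   Context: Let $a=\lceil m/2\rceil$, $b=\lfloor m/2\rfloor$. Place $2^m$ bits (qubits) on a grid with $2^b$ rows and $2^a$ columns, positions $(i,j)$, row $1$ on top, column $1$ leftmost. Bulk checks: for $1\le i<2^b$, $1\le j<2^a$, the set $\{(i,j),(i+1,j),(i,j+1),(i+1,j+1)\}$. Boundary checks: for a line of $L=2^n$ positions $1,\dots,L$, each $s\in\{1,\dots,n-1\}$, $w=2^s$, and integer $t$ with $-L/(2w)+1\le t\le L/(2w)-1$, $S(w,t)=\{L/2-w/2+wt,\ L/2-w/2+wt+1,\ L/2+w/2+wt,\ L/2+w/2+wt+1\}$; these with $n=a$ on the top row ($j\mapsto(1,j)$) and with $n=b$ on the leftmost column ($i\mapsto(i,1)$). $C=uRM(m)$ is the set of $x\in\mathbb{F}_2^{2^m}$ with even sum over every check; it has dimension $m+1$. Base qubits are $m+1$ positions $b_0,\dots,b_m$ such that $x\mapsto(x_{b_0},\dots,x_{b_m})$ is a bijection $C\to\mathbb{F}_2^{m+1}$. The parity label of a qubit $q$ is the unique $L(q)\subseteq\{0,\dots,m\}$ with $x_q=\sum_{i\in L(q)}x_{b_i}$ for all $x\in C$. A code with such labels is called $k$-parity if for every $k$-element subset $K$ of the label indices, the number of qubits whose label contains $K$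 is even. *)

(* Defs.v *)
From mathcomp Require Import all_boot all_order all_algebra.
Set Implicit Arguments. Unset Strict Implicit. Unset Printing Implicit Defensive.
Import Order.TTheory GRing.Theory Num.Theory.
Local Open Scope ring_scope.

Definition acol (m : nat) : nat := uphalf m.
Definition brow (m : nat) : nat := m./2.

(* Qubits: grid positions.  The 1-indexed position (i,j) (row i, column j)
   is represented by the pair of ordinals (i-1, j-1). *)
Definition Q (m : nat) : finType :=
  ('I_(2 ^ brow m) * 'I_(2 ^ acol m))%type.

Definition row1 m (q : Q m) : nat := (val q.1).+1.
Definition col1 m (q : Q m) : nat := (val q.2).+1.

Definition bulk_check m (i j : nat) (q : Q m) : bool :=
  [&& (i <= row1 q)%N, (row1 q <= i.+1)%N, (j <= col1 q)%N & (col1 q <= j.+1)%N].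

Definition line_check (n s : nat) (t : int) (p : int) : bool :=
  let L : int := (2 ^ n)%:Z in
  let w : int := (2 ^ s)%:Z in
  p \in [:: (L %/ 2)%Z - (w %/ 2)%Z + w * t;
            (L %/ 2)%Z - (w %/ 2)%Z + w * t + 1;
            (L %/ 2)%Z + (w %/ 2)%Z + w * t;
            (L %/ 2)%Z + (w %/ 2)%Z + w * t + 1].

Definition line_index (n s : nat) (t : int) : Prop :=
  let L : int := (2 ^ n)%:Z in
  let w : int := (2 ^ s)%:Z in
  [/\ (1 <= s)%N, (s <= n - 1)%N,
      - (L %/ (2 * w))%Z + 1 <= t & t <= (L %/ (2 * w))%Z - 1].

Definition top_check m (s : nat) (t : int) (q : Q m) : bool :=
  (row1 q == 1%N) && line_check (acol m) s t (col1 q)%:Z.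

Definition left_check m (s : nat) (t : int) (q : Q m) : bool :=
  (col1 q == 1%N) && line_check (brow m) s t (row1 q)%:Z.

Definition in_uRM m (x : {ffun Q m -> 'F_2}) : Prop :=
  [/\ (forall i j : nat, (1 <= i)%N -> (i < 2 ^ brow m)%N ->
         (1 <= j)%N -> (j < 2 ^ acol m)%N ->
         \sum_(q | bulk_check i j q) x q = 0),
      (forall s t, line_index (acol m) s t ->
         \sum_(q | top_check s t q) x q = 0) &
      (forall s t, line_index (brow m) s t ->
         \sum_(q | left_check s t q) x q = 0)].

Definition is_base m (bq : 'I_m.+1 -> Q m) : Prop :=
  forall v : 'I_m.+1 -> 'F_2,
    exists! x : {ffun Q m -> 'F_2}, in_uRM x /\ forall i, x (bq i) = v i.

Definition is_parity_label m (bq : 'I_m.+1 -> Q m) (L : Q m -> {set 'I_m.+1}) : Prop :=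
  forall x : {ffun Q m -> 'F_2}, in_uRM x ->
    forall q, x q = \sum_(i in L q) x (bq i).

(* Main.v *)
Require Import Defs.
From mathcomp Require Import all_boot all_order all_algebra.
From mathcomp Require Import zify.
From Stdlib Require Import IndefiniteDescription.

Module PartA.
Set Implicit Arguments. Unset Strict Implicit. Unset Printing Implicit Defensive.
Import Order.TTheory GRing.Theory Num.Theory.
Local Open Scope ring_scope.

Lemma F2_addxx (x : 'F_2) : x + x = 0.
Proof. suff: [forall x : 'F_2, x + x == 0] by move/forallP/(_ x)/eqP. by apply/forallP => -[[|[|k]] Hk]. Qed.

Lemma F2_nat (n : nat) : (n%:R : 'F_2) = (odd n)%:R.
Proof.
elim: n => // n IH; rewrite mulrSr IH /=.
by case: (odd n) => //=; rewrite ?add0r ?F2_addxx.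
Qed.

Lemma F2_eq (x y : 'F_2) : (x + y = 0) -> x = y.
Proof. move=> h; by rewrite -[y]add0r -h -addrA F2_addxx addr0. Qed.

Goal forall a b c : nat, (a <= b)%N && (b <= c)%N = ((a == b) || (a < b)%N) && (b <= c)%N.
move=> a b c. lia. Qed.

End PartA.
Import PartA.

Module PartB.
Set Implicit Arguments. Unset Strict Implicit. Unset Printing Implicit Defensive.

Definition gray (k i : nat) : bool := odd (i %/ 2^k) (+) odd (i %/ 2^k.+1).
Definition refl (k i : nat) : nat := i %/ 2^k.+1 * 2^k.+1 + (2^k.+1 - 1 - i %% 2^k.+1).

Lemma compl_div D E r : 0 < D -> r < E * D -> (E*D - 1 - r) %/ D = E - 1 - r %/ D.
Proof.
move=> D0 rlt.
have alt : r %/ D < E by rewrite ltn_divLR.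
have blt : r %% D < D by rewrite ltn_mod.
have -> : E*D - 1 - r = (E - 1 - r %/ D) * D + (D - 1 - r %% D).
  have := divn_eq r D.
  have : (r %/ D).+1 * D <= E * D by rewrite leq_mul2r alt orbT.
  rewrite !mulnBl mul1n mulSn.
  move: blt; set a := r %/ D; set b := r %% D; set aD := a * D; set ED := E * D. move=> h1 h2 h3. clearbody aD ED b a. clear rlt alt. move: D0 h1 h2 h3. clear. move=> *. lia.
rewrite divnMDl // (@divn_small (D - 1 - r %% D)) ?addn0 //. lia.
Qed.

Lemma refl_small k i : 2^k.+1 - 1 - i %% 2^k.+1 < 2^k.+1.
Proof. have := expn_gt0 2 k.+1; lia. Qed.

Lemma refl_div k i : refl k i %/ 2^k.+1 = i %/ 2^k.+1.
Proof. by rewrite /refl divnMDl ?expn_gt0 // (divn_small (refl_small k i)) addn0. Qed.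

Lemma refl_div_hi j k i : k < j -> refl k i %/ 2^j = i %/ 2^j.
Proof.
move=> kj; rewrite -(subnKC kj) expnD !divnMA refl_div //.
Qed.

Lemma odd_refl_lo j k i : j <= k -> odd (refl k i %/ 2^j) = ~~ odd (i %/ 2^j).
Proof.
move=> jk.
have eM : 2^k.+1 = 2^(k.+1 - j) * 2^j by rewrite -expnD subnK // ltnW.
have Ev : ~~ odd (2^(k.+1 - j)) by rewrite oddX /= orbF subn_eq0 -ltnNge ltnS.
have D0 : 0 < 2^j by rewrite expn_gt0.
set E := 2^(k.+1 - j) in eM Ev *.
have rlt : i %% 2^k.+1 < E * 2^j by rewrite -eM ltn_mod expn_gt0.
have ei := divn_eq i (2^k.+1).
rewrite /refl; move: rlt ei; set q := i %/ 2^k.+1; set r := i %% 2^k.+1.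
move=> rlt ei; rewrite [in RHS]ei; clearbody q r; rewrite eM.
rewrite !mulnA !divnMDl // !oddD !oddM (negbTE Ev) !andbF /=.
rewrite compl_div //.
have alt : r %/ 2^j < E by rewrite ltn_divLR.
rewrite -subnDA add1n oddB // (negbTE Ev) /=. done.
Qed.

Lemma odd_refl j k i : odd (refl k i %/ 2^j) = odd (i %/ 2^j) (+) (j <= k).
Proof.
case: (leqP j k) => h.
  by rewrite odd_refl_lo // addbT.
by rewrite refl_div_hi // addbF.
Qed.

Lemma gray_refl l k i : gray l (refl k i) = gray l i (+) (l == k).
Proof.
rewrite /gray !odd_refl.
by case: (ltngtP l k) => h; case: (odd _); case: (odd _).
Qed.

Lemma refl_refl k i : refl k (refl k i) = i.
Proof.
have M0 : 0 < 2^k.+1 by rewrite expn_gt0.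
have rm : refl k i %% 2^k.+1 = 2^k.+1 - 1 - i %% 2^k.+1.
  by rewrite /refl modnMDl modn_small // refl_small.
rewrite {1}/refl refl_div rm.
have := ltn_mod i (2^k.+1); rewrite M0 => h.
rewrite (_ : 2 ^ k.+1 - 1 - (2 ^ k.+1 - 1 - i %% 2 ^ k.+1) = i %% 2^k.+1); last by lia.
by rewrite -divn_eq.
Qed.

Lemma refl_lt n k i : k < n -> i < 2^n -> refl k i < 2^n.
Proof.
move=> kn iL.
have eN : 2^n = 2^(n - k.+1) * 2^k.+1 by rewrite -expnD subnK.
have M0 : 0 < 2^k.+1 by rewrite expn_gt0.
have q_lt : i %/ 2^k.+1 < 2^(n - k.+1) by rewrite ltn_divLR // -eN.
rewrite /refl eN.
have h1 : (i %/ 2 ^ k.+1).+1 * 2^k.+1 <= 2 ^ (n - k.+1) * 2 ^ k.+1 by rewrite leq_mul2r q_lt orbT.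
move: h1 (refl_small k i); rewrite mulSn.
set a := i %/ 2 ^ k.+1 * 2 ^ k.+1; set M := 2^k.+1; set P := 2 ^ (n - k.+1) * M.
move=> h1 h2; clearbody a M P. lia.
Qed.

Lemma gray_step k c : gray k c.+1 = gray k c (+) ((2^k %| c.+1) (+) (2^k.+1 %| c.+1)).
Proof.
rewrite /gray !divnS ?expn_gt0 // !oddD.
by case: (2^k %| c.+1); case: (2^k.+1 %| c.+1); case: (odd (c %/ 2^k)); case: (odd (c %/ 2^k.+1)).
Qed.

Lemma dvd_step k c : (2^k %| c.+1) (+) (2^k.+1 %| c.+1) = (k == logn 2 c.+1).
Proof.
rewrite !pfactor_dvdn //.
case: (ltngtP k (logn 2 c.+1)) => h //=.
Qed.

End PartB.
Import PartB.

Module PartC.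
Set Implicit Arguments. Unset Strict Implicit. Unset Printing Implicit Defensive.
Import Order.TTheory GRing.Theory Num.Theory.
Local Open Scope ring_scope.

Lemma F2_xor (a b : bool) : ((a (+) b)%:R : 'F_2) = a%:R + b%:R.
Proof. by case: a; case: b; rewrite //= ?add0r ?addr0 ?F2_addxx. Qed.

Lemma odd_decomp p : (0 < p)%N -> exists u, p = (2^(logn 2 p) * u.*2.+1)%N.
Proof.
move=> p0.
have hd := pfactor_dvdnn 2 p.
set v := logn 2 p in hd *.
set o := (p %/ 2^v)%N.
have ep : p = (2^v * o)%N by rewrite mulnC divnK.
have oo : odd o.
  apply/negPn/negP => eo.
  have : (2^v.+1 %| p)%N.
    by rewrite ep expnSr dvdn_pmul2l ?expn_gt0 // dvdn2.
  by rewrite pfactor_dvdn // ltnn.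
exists o./2. rewrite {1}ep; congr (_ * _)%N. by rewrite -[LHS](odd_double_half o) oo add1n.
Qed.

Section Line.
Variable n : nat.
Variable g : nat -> 'F_2.
Hypothesis n0 : (0 < n)%N.
Hypothesis hg : forall v u, (v.+2 <= n)%N -> (2^v * (u.*2 + 3) < 2^n)%N ->
     g (2^v * u.*2.+1 - 1)%N + g (2^v * u.*2.+1)%N + g (2^v*(u.*2+3) - 1)%N + g (2^v*(u.*2+3))%N = 0.

Let D p := g (p - 1)%N + g p.

Lemma D_odd v u : (2^v * u.*2.+1 < 2^n)%N -> D (2^v * u.*2.+1)%N = D (2^v)%N.
Proof.
elim: u => [|u IH] h; first by rewrite muln1.
have h1 : (2 ^ v * (u.*2 + 3) < 2 ^ n)%N by move: h; rewrite doubleS; congr (_ < _)%N; lia.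
have vn : (v.+2 <= n)%N.
  rewrite leqNgt; apply/negP => vn.
  have : (2^n <= 2^v.+1)%N by rewrite leq_exp2l.
  move: h1; rewrite expnS. have := expn_gt0 2 v. set P := (2^v)%N. set Q := (2^n)%N. nia.
have := hg vn h1.
rewrite -IH; last by apply: leq_ltn_trans h1; rewrite leq_mul2l; apply/orP; right; lia.
rewrite /D -addrA => /F2_eq ->.
by rewrite (_ : (u.+1.*2.+1 = u.*2 + 3)%N) ?addrA //; lia.
Qed.

Lemma D_log p : (0 < p)%N -> (p < 2^n)%N -> D p = D (2^(logn 2 p))%N.
Proof.
move=> p0 pn; have [u eu] := odd_decomp p0.
by rewrite {1}eu D_odd // -eu.
Qed.

Lemma line_affine c : (c < 2^n)%N ->
  g c = g 0%N + \sum_(k < n) (g (2^k - 1)%N + g (2^k)%N) * (gray k c)%:R.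
Proof.
elim: c => [|c IH] h.
  rewrite big1 ?addr0 // => k _.
  by rewrite /gray !div0n /= mulr0.
have hc : (c < 2^n)%N by lia.
have e1 : g c.+1 = g c + D c.+1 by rewrite /D subn1 /= addrA F2_addxx add0r.
rewrite e1 IH // D_log //.
have vn : (logn 2 c.+1 < n)%N.
  have : (2^(logn 2 c.+1) <= c.+1)%N by apply: dvdn_leq; rewrite ?pfactor_dvdnn.
  move=> hh; rewrite -(ltn_exp2l _ _ (isT : (1 < 2)%N)); lia.
under [in RHS]eq_bigr => k _ do rewrite gray_step dvd_step F2_xor mulrDr.
rewrite big_split -!addrA; congr (_ + (_ + _)).
rewrite (bigD1 (Ordinal vn)) //= eqxx mulr1 big1 ?addr0 // => k hk.
rewrite (_ : (val k == logn 2 c.+1) = false) ?mulr0 //.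
by apply/negbTE; move: hk; apply: contra => /eqP hk; apply/eqP/val_inj.
Qed.
End Line.

End PartC.
Import PartC.

Module PartD.
Set Implicit Arguments. Unset Strict Implicit. Unset Printing Implicit Defensive.
Import Order.TTheory GRing.Theory Num.Theory.
Local Open Scope ring_scope.

Definition ord0e (k : nat) : 'I_(2^k) := Ordinal (n:=(2^k)%N) (m:=0%N) (ltac:(by rewrite expn_gt0)).
Definition ofn (k i : nat) : 'I_(2^k) := insubd (ord0e k) i.

Lemma ofnK k i : (i < 2^k)%N -> val (ofn k i) = i.
Proof. by move=> h; rewrite /ofn val_insubd h. Qed.

Lemma ofn_eq k i (j : 'I_(2^k)) : (i < 2^k)%N -> (j == ofn k i) = (nat_of_ord j == i).
Proof. by move=> h; rewrite -val_eqE /= ofnK. Qed.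

Lemma sum_list (T : finType) (P : pred T) (x : T -> 'F_2) (s : seq T) :
  uniq s -> P =1 mem s -> \sum_(q | P q) x q = \sum_(q <- s) x q.
Proof. by move=> us hP; rewrite big_uniq //; apply: eq_bigl. Qed.

Lemma line_vals n v u : (v.+2 <= n)%N -> (2^v*(u.*2+3) < 2^n)%N ->
  line_index n v.+1 ((u.+1)%:Z - (2^(n - v.+2))%:Z) /\
  (forall p : int, line_check n v.+1 ((u.+1)%:Z - (2^(n - v.+2))%:Z) p =
     (p \in map Posz [:: 2^v * u.*2.+1; (2^v * u.*2.+1).+1; 2^v*(u.*2+3); (2^v*(u.*2+3)).+1]%N)).
Proof.
move=> vn hlt.
have eN : (2^n = 2^(n - v.+2) * 2^v * 4)%N by rewrite -mulnA (_ : 4 = 2^2)%N // -!expnD; congr (_ ^ _)%N; lia.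
have e1 : (2^n %/ 2 = 2^(n - v.+2) * 2^v * 2)%N by rewrite eN (_ : 4 = 2 * 2)%N // mulnA mulnK.
have e2 : (2^v.+1 %/ 2 = 2^v)%N by rewrite expnSr mulnK.
have e3 : (2^n %/ (2 * 2^v.+1) = 2^(n - v.+2))%N.
  by rewrite -expnS -{1}(subnK vn) expnD mulnK // expn_gt0.
have A0 : (0 < 2^v)%N by rewrite expn_gt0.
move: hlt; rewrite eN.
set A := (2^v)%N in A0 e1 e2 e3 eN *; set C := (2^(n - v.+2))%N in e1 e3 eN *.
move=> hlt.
split.
  rewrite /line_index -PoszM divz_nat e3 -/C.
  split => //; first by lia.
  - rewrite lerBrDr. have : (0 < C)%N by rewrite expn_gt0. lia.
  - have : (u.+2 <= C.*2)%N by nia. lia.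
move=> p; rewrite /line_check !divz_nat e1 e2 (expnS 2 v) -/A.
congr (p \in _); rewrite /=; congr [:: _; _; _; _]; nia.
Qed.

Section Checks.
Variable m : nat.
Variable x : {ffun Q m -> 'F_2}.
Hypothesis hx : in_uRM x.

Let X (r c : nat) := x (ofn (brow m) r, ofn (acol m) c).

Lemma top_line v u : (v.+2 <= acol m)%N -> (2^v * (u.*2 + 3) < 2^acol m)%N ->
  X 0 (2^v * u.*2.+1 - 1)%N + X 0 (2^v * u.*2.+1)%N + X 0 (2^v*(u.*2+3) - 1)%N + X 0 (2^v*(u.*2+3))%N = 0.
Proof.
move=> vn hlt.
have [li hc] := line_vals vn hlt.
case: hx => _ htop _.
have := htop _ _ li.
have b0 : (0 < 2^brow m)%N by rewrite expn_gt0.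
have P1lt : (2^v * u.*2.+1 < 2^v*(u.*2+3))%N by rewrite ltn_mul2l expn_gt0 /=; lia.
have P0 : (0 < 2^v * u.*2.+1)%N by rewrite muln_gt0 expn_gt0.
rewrite (@sum_list _ _ _ [:: (ofn (brow m) 0, ofn (acol m) (2^v * u.*2.+1 - 1)); (ofn (brow m) 0, ofn (acol m) (2^v * u.*2.+1));
   (ofn (brow m) 0, ofn (acol m) (2^v*(u.*2+3) - 1)); (ofn (brow m) 0, ofn (acol m) (2^v*(u.*2+3)))]).
- by rewrite !big_cons big_nil addr0 !addrA.
- apply: (@map_uniq _ _ (fun q : Q m => val q.2)); rewrite /= !ofnK; try lia.
  rewrite !inE; lia.
- move=> [i j]; rewrite /top_check hc /Defs.row1 /Defs.col1 /=.
  rewrite !inE !xpair_eqE !ofn_eq //; try lia.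
Qed.

Lemma left_line v u : (v.+2 <= brow m)%N -> (2^v * (u.*2 + 3) < 2^brow m)%N ->
  X (2^v * u.*2.+1 - 1)%N 0 + X (2^v * u.*2.+1)%N 0 + X (2^v*(u.*2+3) - 1)%N 0 + X (2^v*(u.*2+3))%N 0 = 0.
Proof.
move=> vn hlt.
have [li hc] := line_vals vn hlt.
case: hx => _ _ hleft.
have := hleft _ _ li.
have b0 : (0 < 2^acol m)%N by rewrite expn_gt0.
have P1lt : (2^v * u.*2.+1 < 2^v*(u.*2+3))%N by rewrite ltn_mul2l expn_gt0 /=; lia.
have P0 : (0 < 2^v * u.*2.+1)%N by rewrite muln_gt0 expn_gt0.
rewrite (@sum_list _ _ _ [:: (ofn (brow m) (2^v * u.*2.+1 - 1), ofn (acol m) 0); (ofn (brow m) (2^v * u.*2.+1), ofn (acol m) 0);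
   (ofn (brow m) (2^v*(u.*2+3) - 1), ofn (acol m) 0); (ofn (brow m) (2^v*(u.*2+3)), ofn (acol m) 0)]).
- by rewrite !big_cons big_nil addr0 !addrA.
- apply: (@map_uniq _ _ (fun q : Q m => val q.1)); rewrite /= !ofnK; try lia.
  rewrite !inE; lia.
- move=> [i j]; rewrite /left_check hc /Defs.row1 /Defs.col1 /=.
  rewrite !inE !xpair_eqE !ofn_eq //; try lia.
Qed.

Lemma bulk r c : (r.+1 < 2^brow m)%N -> (c.+1 < 2^acol m)%N ->
  X r c + X r.+1 c + X r c.+1 + X r.+1 c.+1 = 0.
Proof.
move=> hr hc.
case: hx => hb _ _.
have := hb r.+1 c.+1 isT hr isT hc.
rewrite (@sum_list _ _ _ [:: (ofn (brow m) r, ofn (acol m) c); (ofn (brow m) r.+1, ofn (acol m) c);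
   (ofn (brow m) r, ofn (acol m) c.+1); (ofn (brow m) r.+1, ofn (acol m) c.+1)]).
- by rewrite !big_cons big_nil addr0 !addrA.
- apply: (@map_uniq _ _ (fun q : Q m => (val q.1, val q.2))); rewrite /= !ofnK; try lia.
  rewrite !inE !xpair_eqE; lia.
- move=> [i j]; rewrite /bulk_check /Defs.row1 /Defs.col1 /=.
  rewrite !inE !xpair_eqE !ofn_eq //; try lia.
Qed.

End Checks.

End PartD.
Import PartD.

Module PartE.
Set Implicit Arguments. Unset Strict Implicit. Unset Printing Implicit Defensive.
Import Order.TTheory GRing.Theory Num.Theory.
Local Open Scope ring_scope.

Lemma big_opt (T : finType) (F : option T -> 'F_2) : \sum_j F j = F None + \sum_t F (Some t).
Proof.
rewrite (bigD1 None) //=; congr (_ + _).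
rewrite (reindex_omap Some (fun x => x)) /=; last by case.
by apply: eq_bigl => j; rewrite eqxx.
Qed.

Lemma F2_id5 (a b e f g : 'F_2) : (a+b+e) + (f+b+e) + (a+g+e) = f+g+e.
Proof. apply/eqP; move: a b e f g; do 5! (case=> -[|[|?]] ? //). Qed.

Lemma F2_id3 (e a b : 'F_2) : e + a + (e + b) + e = e + (a + b).
Proof. apply/eqP; move: a b e; do 3! (case=> -[|[|?]] ? //). Qed.

Definition Jt m := option ('I_(brow m) + 'I_(acol m)).
Definition valJ m (J : Jt m) (q : Q m) : 'F_2 :=
  match J with None => 1 | Some (inl l) => (gray l (val q.1))%:R | Some (inr l) => (gray l (val q.2))%:R end.

Section Rep.
Variable m : nat.
Hypothesis hm : (2 <= m)%N.
Variable x : {ffun Q m -> 'F_2}.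
Hypothesis hx : in_uRM x.

Let X (r c : nat) := x (ofn (brow m) r, ofn (acol m) c).

Lemma decomp r c : (r < 2^brow m)%N -> (c < 2^acol m)%N -> X r c = X r 0 + X 0 c + X 0 0.
Proof.
elim: r c => [|r IHr] c hr hc.
  by rewrite addrC addrA F2_addxx add0r.
elim: c hc => [|c IHc] hc.
  by rewrite -addrA F2_addxx addr0.
have -> : X r.+1 c.+1 = X r c + X r.+1 c + X r c.+1.
  by apply/esym/F2_eq; exact: (bulk hx (hr : (r.+1 < 2^brow m)%N) hc).
rewrite IHc; last by lia.
rewrite (IHr c) ?(IHr c.+1); try lia.
by rewrite F2_id5.
Qed.

Lemma affine_rep : exists coef : Jt m -> 'F_2, forall q, x q = \sum_J coef J * valJ J q.
Proof.
have a0 : (0 < acol m)%N by rewrite /acol uphalf_half; lia.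
have b0 : (0 < brow m)%N by rewrite /brow; lia.
have ht := line_affine (n := acol m) (g := fun c => X 0 c) a0 (top_line hx).
have hl := line_affine (n := brow m) (g := fun r => X r 0) b0 (left_line hx).
exists (fun J : Jt m => match J with None => X 0 0
  | Some (inl l) => X (2^l - 1)%N 0 + X (2^l)%N 0
  | Some (inr l) => X 0 (2^l - 1)%N + X 0 (2^l)%N end).
move=> [i j].
have -> : x (i, j) = X i j.
  by rewrite /X; congr (x (_, _)); apply: val_inj; rewrite ofnK.
rewrite decomp // ht // hl // big_opt big_sumType /= mulr1.
by rewrite F2_id3.
Qed.
End Rep.

End PartE.
Import PartE.

Module PartF.
Set Implicit Arguments. Unset Strict Implicit. Unset Printing Implicit Defensive.
Import Order.TTheory GRing.Theory Num.Theory.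
Local Open Scope ring_scope.

Lemma flip_sum (T : finType) (s : T -> T) (P : pred T) (h : T -> 'F_2) :
  involutive s -> (forall t, P (s t) = ~~ P t) -> (forall t, h (s t) = h t) ->
  \sum_t h t = 0.
Proof.
move=> sI hP hh.
rewrite (bigID P) /=.
have -> : \sum_(t | ~~ P t) h t = \sum_(t | P t) h t.
  rewrite (reindex_inj (inv_inj sI)) /=.
  by apply: eq_big => t; rewrite ?hP ?negbK ?hh.
by rewrite F2_addxx.
Qed.

Section Flip.
Variable m : nat.
Variable j0 : 'I_(brow m) + 'I_(acol m).

Definition sig (q : Q m) : Q m :=
  match j0 with
  | inl l => (ofn (brow m) (refl l (val q.1)), q.2)
  | inr l => (q.1, ofn (acol m) (refl l (val q.2)))
  end.

Definition Pj (q : Q m) : bool :=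
  match j0 with inl l => gray l (val q.1) | inr l => gray l (val q.2) end.

Lemma sig_inv : involutive sig.
Proof.
move=> [i j]; rewrite /sig; case: j0 => l /=.
  have h : (refl l i < 2^brow m)%N by apply: refl_lt.
  congr (_, _); apply: val_inj; rewrite /= !ofnK ?refl_refl //.
have h : (refl l j < 2^acol m)%N by apply: refl_lt.
congr (_, _); apply: val_inj; rewrite /= !ofnK ?refl_refl //.
Qed.

Lemma Pj_sig q : Pj (sig q) = ~~ Pj q.
Proof.
case: q => i j; rewrite /Pj /sig; case: j0 => l /=.
  by rewrite ofnK ?refl_lt // gray_refl eqxx addbT.
by rewrite ofnK ?refl_lt // gray_refl eqxx addbT.
Qed.

Lemma valJ_sig (J : Jt m) q : J != Some j0 -> valJ J (sig q) = valJ J q.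
Proof.
case: q => i j; rewrite /sig; case: J => [[l'|l']|] //=; case: j0 => l /= hne //;
  rewrite ofnK ?refl_lt // gray_refl;
  (have -> : (l' == l :> nat) = false by apply/negbTE; apply: contra hne => /eqP/val_inj ->);
  by rewrite addbF.
Qed.
End Flip.

End PartF.
Import PartF.

Module PartG.
Set Implicit Arguments. Unset Strict Implicit. Unset Printing Implicit Defensive.
Import Order.TTheory GRing.Theory Num.Theory.
Local Open Scope ring_scope.

Lemma key (m : nat) (hm : (2 <= m)%N) (K : {set 'I_m.+1}) (hK : #|K| = (m - 1)%N)
  (cf : 'I_m.+1 -> Jt m -> 'F_2) :
  \sum_(q : Q m) \prod_(k in K) \sum_(J : Jt m) cf k J * valJ J q = 0.
Proof.
under eq_bigr => q _ do rewrite (big_distr_big None).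
rewrite exchange_big /=.
apply: big1 => f _.
under eq_bigr => q _ do rewrite big_split /=.
rewrite -mulr_sumr.
suff -> : \sum_(q : Q m) \prod_(k in K) valJ (f k) q = 0 by rewrite mulr0.
set used := [set j | Some j \in f @: K].
have cu : (#|used| <= m - 1)%N.
  rewrite -hK.
  have <- : #|(@Some _) @: used| = #|used| by apply: card_imset => ? ? [].
  apply: leq_trans (leq_imset_card f K).
  apply: subset_leq_card; apply/subsetP => y /imsetP [j]; rewrite inE => hj ->. done.
have cT : #|{: ('I_(brow m) + 'I_(acol m))%type}| = m.
  rewrite card_sum !card_ord /brow /acol uphalf_half.
  have := odd_double_half m; rewrite -muln2; lia.
case: (pickP [pred j | j \notin used]) => [j0 /= hj0 | none]; last first.
  have : used = setT by apply/setP => j; rewrite in_setT; apply/negbFE; exact: none j.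
  move=> eu; move: cu; rewrite eu cardsT cT; lia.
apply: (@flip_sum _ (sig j0) (Pj j0)); first exact: sig_inv.
  exact: Pj_sig.
move=> q; apply: eq_bigr => k hk; apply: valJ_sig.
apply: contra hj0 => /eqP e; rewrite inE -e; apply/imsetP; by exists k.
Qed.


End PartG.
Import PartG.

Import GRing.Theory.

Theorem lemma5 (m : nat) (hm : (2 <= m)%N)
  (bq : 'I_m.+1 -> Q m) (hb : is_base bq)
  (L : Q m -> {set 'I_m.+1}) (hL : is_parity_label bq L) :
  forall K : {set 'I_m.+1}, #|K| = (m - 1)%N ->
    ~~ odd #|[set q : Q m | K \subset L q]|.
Proof.
move=> K hK.
have hx k : {x : {ffun Q m -> 'F_2} | in_uRM x /\ forall i, x (bq i) = ((i == k)%:R)%R}.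
  apply: constructive_indefinite_description.
  have [x [hx _]] := hb (fun i => ((i == k)%:R)%R). by exists x.
pose xs k := sval (hx k).
have xsU k : in_uRM (xs k) := proj1 (svalP (hx k)).
have xsB k i : xs k (bq i) = ((i == k)%:R)%R := proj2 (svalP (hx k)) i.
have xsL k q : xs k q = ((k \in L q)%:R)%R.
  rewrite (hL _ (xsU k)) (eq_bigr _ (fun i _ => xsB k i)) big_mkcond (bigD1 k) //= eqxx big1 ?GRing.addr0.
  - by case: (k \in L q).
  - by move=> i /negbTE ->; case: (i \in L q).
have cf k : {c : Jt m -> 'F_2 | forall q, xs k q = (\sum_J c J * valJ J q)%R}.
  apply: constructive_indefinite_description; have := affine_rep hm (xsU k). by move=> [c0 hc]; exists c0.
pose c k := sval (cf k).
have main := key hm hK c.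
have : (\sum_q \prod_(k in K) xs k q = 0)%R.
  apply: (etrans _ main); apply: eq_bigr => q _; apply: eq_bigr => k _; exact: (svalP (cf k) q).
rewrite (eq_bigr (fun q => ((K \subset L q)%:R)%R)); last first.
  move=> q _; case: (boolP (K \subset L q)) => h.
  - by rewrite big1 // => k hk; rewrite xsL (subsetP h k hk).
  - have [k hk nk] := subsetPn h.
    by rewrite (bigD1 k) //= xsL (negbTE nk) GRing.mul0r.
move=> e.
have : ((#|[set q | K \subset L q]|%:R : 'F_2) = 0)%R.
  rewrite -e -sum1_card GRing.natr_sum big_mkcond; apply: eq_bigr => q _; rewrite inE.
  by case: (K \subset L q).
by rewrite F2_nat; case: (odd _).
Qed.
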